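(* Consider a restless bandit and a set system $(N^{\{0,1\}},\mathcal F)$ as in the context, and suppose the bandit is PCL-indexable relative to the activity measure $b^u$ and $\mathcal F$-policies, with index vector $(\nu_j)_{j\in N^{\{0,1\}}}$ produced by the adaptive-greedy algorithm on input $\widehat{\mathbf h}^0_{N^{\{0,1\}}}$. Then the $\nu$-charge problem is indexable relative to $\mathcal F$-policies, and the dynamic allocation index of each controllable state $j\in N^{\{0,1\}}$ is $\nu_j$; that is, for every $\nu\in\mathbb R$, $S(\nu)=\{j\in N^{\{0,1\}}:\nu\le\nu_j\}\in\mathcal F$.
   Context: Restless bandit: finite state space $N=N^{\{0,1\}}\cup N^{\{1\}}$ (disjoint; controllable and uncontrollable states); actions $a\in\{0,1\}$ (passive/active); one-period costs $h^a_i$, transition probabilities $p^a_{ij}$ with $p^1_{ij}=p^0_{ij}$ for $i\in N^{\{1\}}$; discount factor $\beta\in(0,1)$; activity weights $\theta^1_j>0$. Stationary policies $u:N\to[0,1]$ ($u(i)$ = probability of the active action) with $u(i)=1$ on $N^{\{1\}}$. With $X(t)$ the state and $a(t)$ the action at period $t$: $v^u_i=E^u_i[\sum_{t\ge0}h^{a(t)}_{X(t)}\beta^t]$, $b^u_i=E^u_i[\sum_{t\ge0}\theta^1_{X(t)}a(t)\beta^t]$. For $S\subseteq N^{\{0,1\}}$ the $S$-active policy is active on $S\cup N^{\{1\}}$ and passive elsewhere; $v^S_i,b^S_i$ its measures. The $\nu$-charge problem: $v_i(\nu)=\min_u\{v^u_i+\nu b^u_i\}$; $S(\nu)$ denotes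 the set of $j\in N^{\{0,1\}}$ where the active action attains the minimum in the dynamic programming equation $v_j(\nu)=\min_{a}\{h^a_j+\nu\theta^1_j a+\beta\sum_k p^a_{jk}v_k(\nu)\}$. Marginal workloads: $w^S_i=\theta^1_i 1\{i\in N^{\{0,1\}}\}+\beta\sum_{j}(p^1_{ij}-p^0_{ij})b^S_j$. Normalized passive-cost vector: $\widehat{\mathbf h}^0=\mathbf h^0-(\mathbf I-\beta\mathbf P^0)(\mathbf I-\beta\mathbf P^1)^{-1}\mathbf h^1$. Set system: $\mathcal F\subseteq 2^{N^{\{0,1\}}}$ with $\emptyset\in\mathcal F$; every nonempty $S\in\mathcal F$ has nonempty inner boundary $\partial^-S=\{j\in S:S\setminus\{j\}\in\mathcal F\}$; every $S\in\mathcal F$, $S\ne N^{\{0,1\}}$, has some $j\notin S$ with $S\cup\{j\}\in\mathcal F$. An $\mathcal F$-policy is an $S$-active policy with $S\in\mathcal F$. Indexability relative to $\mathcal F$-policies: as $\nu$ increases from $-\infty$ to $+\infty$, $S(\nu)$ decreases monotonically from $N^{\{0,1\}}$ to $\emptyset$, with $S(\nu)\in\mathcal F$ for all $\nu$; the dynamic allocation index of $j$ is the critical charge $\nu_j$ with $S(\nu)=\{j:\nu\le\nu_j\}$. Adaptive-greedy algorithm on input $\mathbf c=(c_j)_{j\in N^{\{0,1\}}}$, with $n=|N^{\{0,1\}}|$: set $S_1=N^{\{0,1\}}$, $y^{S_1}=\min\{c_j/w^{S_1}_j: j\in\partial^-S_1\}$, $\pi_1$ a minimizer, $\nu_{\pi_1}=y^{S_1}$;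 for $k=2,\dots,n$: $S_k=S_{k-1}\setminus\{\pi_{k-1}\}$, $y^{S_k}=\min\{(c_j-\sum_{l=1}^{k-1}y^{S_l}w^{S_l}_j)/w^{S_k}_j: j\in\partial^-S_k\}$, $\pi_k$ a minimizer, $\nu_{\pi_k}=\nu_{\pi_{k-1}}+y^{S_k}$. PCL-indexability: (i) $w^S_j>0$ for all $S\in\mathcal F$, $j\in N^{\{0,1\}}$; (ii) the algorithm on input $\widehat{\mathbf h}^0_{N^{\{0,1\}}}=(\widehat h^0_j)_{j\in N^{\{0,1\}}}$ yields $\nu_{\pi_1}\le\cdots\le\nu_{\pi_n}$. *)

(* Defs.v *)
From mathcomp Require Import classical_sets reals.
From mathcomp Require Import all_boot all_order all_algebra.
Set Implicit Arguments. Unset Strict Implicit. Unset Printing Implicit Defensive.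
Import Order.TTheory GRing.Theory Num.Theory.
Local Open Scope ring_scope.

(* States are 'I_N.  ctrl j  <=> j \in N^{0,1} (controllable);
   ~~ ctrl j <=> j \in N^{1} (uncontrollable). *)

Section Bandit.
Variables (R : realType) (N : nat).
Variables (ctrl : pred 'I_N) (P0 P1 : 'M[R]_N) (h0 h1 : 'cV[R]_N)
          (beta : R) (th : 'I_N -> R).

Definition stochastic (P : 'M[R]_N) :=
  (forall i j, 0 <= P i j) /\ (forall i, \sum_j P i j = 1).

(* stationary (randomized) policies: u i = prob. of the active action *)
Definition admissible (u : 'I_N -> R) : Prop :=
  (forall i, 0 <= u i <= 1) /\ (forall i, ~~ ctrl i -> u i = 1).

Definition Pu (u : 'I_N -> R) : 'M[R]_N :=
  \matrix_(i, j) ((1 - u i) * P0 i j + u i * P1 i j).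
Definition hu (u : 'I_N -> R) : 'cV[R]_N :=
  \col_i ((1 - u i) * h0 i 0 + u i * h1 i 0).
Definition thu (u : 'I_N -> R) : 'cV[R]_N := \col_i (th i * u i).

(* expected total discounted value of one-period reward r under the
   Markov chain with transition matrix Q:  sum_t beta^t Q^t r
   = (I - beta Q)^{-1} r *)
Definition disc (Q : 'M[R]_N) (r : 'cV[R]_N) : 'cV[R]_N :=
  invmx (1%:M - beta *: Q) *m r.

Definition vpol (u : 'I_N -> R) : 'cV[R]_N := disc (Pu u) (hu u).
Definition bpol (u : 'I_N -> R) : 'cV[R]_N := disc (Pu u) (thu u).

Definition Sact (S : {set 'I_N}) (i : 'I_N) : R :=
  if (i \in S) || ~~ ctrl i then 1 else 0.
Definition bS (S : {set 'I_N}) : 'cV[R]_N := bpol (Sact S).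

Definition vopt (nu : R) (i : 'I_N) : R :=
  inf ((fun u => vpol u i 0 + nu * bpol u i 0) @` admissible)%classic.

(* S(nu): controllable states where the active action attains the
   minimum in the DP equation *)
Definition Sopt (nu : R) : {set 'I_N} :=
  [set j | ctrl j &
     h1 j 0 + nu * th j + beta * \sum_k P1 j k * vopt nu k
     <= h0 j 0 + beta * \sum_k P0 j k * vopt nu k].

Definition wS (S : {set 'I_N}) (i : 'I_N) : R :=
  th i * (ctrl i)%:R + beta * \sum_j (P1 i j - P0 i j) * bS S j 0.

Definition hhat0 : 'cV[R]_N :=
  h0 - (1%:M - beta *: P0) *m invmx (1%:M - beta *: P1) *m h1.

End Bandit.

Section SetSystem.
Variables (N : nat) (ctrl : pred 'I_N) (F : {set {set 'I_N}}).

Definition ctrlset : {set 'I_N} := [set j | ctrl j].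

Definition setsys_F : Prop :=
  [/\ forall S, S \in F -> S \subset ctrlset,
      set0 \in F,
      forall S, S \in F -> S != set0 -> exists2 j, j \in S & S :\ j \in F
    & forall S, S \in F -> S != ctrlset ->
        exists2 j, j \in ctrlset :\: S & j |: S \in F].

Definition inner_bd (S : {set 'I_N}) : {set 'I_N} :=
  [set j in S | S :\ j \in F].

End SetSystem.

Section Greedy.
Variables (R : realType) (N : nat) (ctrl : pred 'I_N) (F : {set {set 'I_N}}).
Variables (w : {set 'I_N} -> 'I_N -> R) (c : 'I_N -> R).

(* pi : 'I_n -> 'I_N with n = |N^{0,1}|; step k (0-based) *)
Definition Sk (n : nat) (pi : 'I_n -> 'I_N) (k : nat) : {set 'I_N} :=
  [set j | ctrl j & [forall l : 'I_n, (l < k)%N ==> (pi l != j)]].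

(* (pi, nu) is a possible output of the adaptive-greedy algorithm on
   input c, with workloads w.  y k = y^{S_{k+1}} (0-based). *)
Definition AG_run (pi : 'I_#|ctrlset ctrl| -> 'I_N) (nu : 'I_N -> R) : Prop :=
  exists y : nat -> R,
  forall k : 'I_#|ctrlset ctrl|,
    let S := Sk pi k in
    let resid j := c j - \sum_(l < #|ctrlset ctrl| | (l < k)%N)
                           y l * w (Sk pi l) j in
    [/\ pi k \in inner_bd F S,
        y k = resid (pi k) / w S (pi k),
        (forall j, j \in inner_bd F S -> y k <= resid j / w S j)
      & nu (pi k) = \sum_(l < #|ctrlset ctrl| | (l <= k)%N) y l].

End Greedy.
Arguments AG_run {R N} ctrl F w c pi nu.

(* Main.v *)
Require Import Defs.
From mathcomp Require Import classical_sets reals.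
From mathcomp Require Import all_boot all_order all_algebra.
From mathcomp Require Import ring lra.
Set Implicit Arguments. Unset Strict Implicit. Unset Printing Implicit Defensive.
Import Order.TTheory GRing.Theory Num.Theory.
Local Open Scope ring_scope.

Section MDP.
Variables (R : realType) (N : nat) (ctrl : pred 'I_N) (P0 P1 : 'M[R]_N)
  (h0 h1 : 'cV[R]_N) (beta : R) (th : 'I_N -> R).
Hypotheses (Hb0 : 0 < beta) (Hb1 : beta < 1).

Lemma minp (Q : 'M[R]_N) (x g : 'I_N -> R) :
  (forall i j, 0 <= Q i j) -> (forall i, \sum_j Q i j = 1) ->
  (forall i, 0 <= g i) ->
  (forall i, x i = g i + beta * \sum_j Q i j * x j) -> forall i, 0 <= x i.
Proof.
move=> Q0 Q1 g0 Hx i.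
have [i0 Hmin] : exists i0, forall j, x i0 <= x j.
  case: (@arg_minP _ _ _ i predT x isT) => i1 _ H; exists i1 => j; exact: H.
suff : 0 <= x i0 by move=> h; exact: le_trans h (Hmin i).
have Hs : x i0 <= \sum_j Q i0 j * x j.
  rewrite {1}(_ : x i0 = \sum_j Q i0 j * x i0); last by rewrite -mulr_suml Q1 mul1r.
  by apply: ler_sum => j _; apply: ler_wpM2l.
have Hs2 : beta * x i0 <= beta * \sum_j Q i0 j * x j by rewrite ler_wpM2l // ltW.
have h : 0 <= (1 - beta) * x i0.
  have := Hx i0; have := g0 i0; rewrite mulrBl mul1r; lra.
by rewrite pmulr_rge0 ?subr_gt0 in h.
Qed.

Lemma unit_of_inj n (A : 'M[R]_n) :
  (forall v : 'cV[R]_n, A *m v = 0 -> v = 0) -> A \in unitmx.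
Proof.
move=> H; rewrite unitmxE unitfE -det_tr; apply/negP => /det0P [v vn0 Hv].
have := H v^T; rewrite -[A]trmxK -trmx_mul Hv trmx0 => /(_ erefl) /eqP.
by rewrite trmx_eq0 (negbTE vn0).
Qed.

Definition stoch (Q : 'M[R]_N) := (forall i j, 0 <= Q i j) /\ (forall i, \sum_j Q i j = 1).

Lemma entryA (Q : 'M[R]_N) (v : 'cV[R]_N) i :
  ((1%:M - beta *: Q) *m v) i 0 = v i 0 - beta * \sum_j Q i j * v j 0.
Proof. by rewrite mulmxBl mul1mx -scalemxAl !mxE. Qed.

Lemma unitQ Q : stoch Q -> (1%:M - beta *: Q) \in unitmx.
Proof.
move=> [Q0 Q1]; apply: unit_of_inj => v Hv.
have Hx : forall i, v i 0 = 0 + beta * \sum_j Q i j * v j 0.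
  move=> i; have := congr1 (fun M : 'cV[R]_N => M i 0) Hv.
  rewrite entryA mxE => /eqP; rewrite subr_eq0 => /eqP ->; by rewrite add0r.
have Hy : forall i, - v i 0 = 0 + beta * \sum_j Q i j * (- v j 0).
  move=> i; rewrite Hx !add0r -mulrN -sumrN; congr (_ * _).
  by apply: eq_bigr => j _; rewrite mulrN.
apply/matrixP => i j; rewrite (ord1 j) mxE.
have e1 := minp Q0 Q1 (fun _ => lexx 0) Hx i.
have e2 := minp Q0 Q1 (fun _ => lexx 0) Hy i.
apply/eqP; rewrite eq_le e1 andbT; by rewrite -oppr_ge0.
Qed.

Lemma disc_fix Q r : stoch Q -> forall i,
  disc beta Q r i 0 = r i 0 + beta * \sum_j Q i j * disc beta Q r j 0.
Proof.
move=> sQ i; have E := mulKVmx (unitQ sQ) r.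
have := congr1 (fun M : 'cV[R]_N => M i 0) E; rewrite entryA => <-.
by rewrite /disc subrK.
Qed.

Lemma sum_lin (a f g : 'I_N -> R) c :
  \sum_k a k * (f k + c * g k) = \sum_k a k * f k + c * \sum_k a k * g k.
Proof. rewrite [c * _]mulr_sumr -big_split; apply: eq_bigr => k _ /=; ring. Qed.

Lemma sum_sub (a f g : 'I_N -> R) :
  \sum_k a k * (f k - g k) = \sum_k a k * f k - \sum_k a k * g k.
Proof. by rewrite -sumrB; apply: eq_bigr => k _; ring. Qed.

Lemma sum_Pu (u : 'I_N -> R) i (f : 'I_N -> R) :
  \sum_j Pu P0 P1 u i j * f j =
  (1 - u i) * \sum_j P0 i j * f j + u i * \sum_j P1 i j * f j.
Proof. rewrite !mulr_sumr -big_split; apply: eq_bigr => j _ /=; rewrite mxE. ring. Qed.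

Hypotheses (HP0 : stoch P0) (HP1 : stoch P1).

Definition unit01 (u : 'I_N -> R) := forall i, 0 <= u i <= 1.

Lemma stoch_Pu u : unit01 u -> stoch (Pu P0 P1 u).
Proof.
move=> Hu; case: HP0 => A0 B0; case: HP1 => A1 B1; split.
  move=> i j; rewrite mxE; have := Hu i; have := A0 i j; have := A1 i j; nra.
move=> i; have := sum_Pu u i (fun _ => 1).
have E : forall Q : 'M[R]_N, \sum_j Q i j * 1 = \sum_j Q i j.
  by move=> Q; apply: eq_bigr => j _; rewrite mulr1.
rewrite !E B0 B1 => ->; ring.
Qed.

Definition Vf u nu i := vpol P0 P1 h0 h1 beta u i 0 + nu * bpol P0 P1 beta th u i 0.
Definition Aq nu (f : 'I_N -> R) j := h1 j 0 + nu * th j + beta * \sum_k P1 j k * f k.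
Definition Bq (f : 'I_N -> R) j := h0 j 0 + beta * \sum_k P0 j k * f k.
Definition Tu (u : 'I_N -> R) nu f i := (1 - u i) * Bq f i + u i * Aq nu f i.

Lemma Vf_fix u nu : unit01 u -> forall i, Vf u nu i = Tu u nu (Vf u nu) i.
Proof.
move=> Hu i; have sP := stoch_Pu Hu.
rewrite /Vf /vpol /bpol !(disc_fix _ sP) /Tu /Aq /Bq !sum_lin !sum_Pu !mxE.
ring.
Qed.

Lemma Tu_diff u nu f V i :
  Tu u nu f i - Tu u nu V i = beta * \sum_j Pu P0 P1 u i j * (f j - V j).
Proof. rewrite sum_Pu /Tu /Aq /Bq !sum_sub; ring. Qed.

Lemma compare u nu (f V : 'I_N -> R) : unit01 u ->
  (forall i, f i = Tu u nu f i) -> (forall i, V i <= Tu u nu V i) ->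
  forall i, V i <= f i.
Proof.
move=> Hu Hf HV i; have [A B] := stoch_Pu Hu.
rewrite -subr_ge0.
apply: (minp (x := fun i => f i - V i) (g := fun i => Tu u nu V i - V i) A B).
  by move=> j; rewrite subr_ge0.
move=> j; rewrite -(Tu_diff u nu f V j) -(Hf j); ring.
Qed.

Lemma uniq_fix u nu (f g : 'I_N -> R) : unit01 u ->
  (forall i, f i = Tu u nu f i) -> (forall i, g i = Tu u nu g i) -> f =1 g.
Proof.
move=> Hu Hf Hg i; apply/eqP; rewrite eq_le.
have Ef : forall j, f j <= Tu u nu f j by move=> j; rewrite -Hf.
have Eg : forall j, g j <= Tu u nu g j by move=> j; rewrite -Hg.
by rewrite (compare Hu Hg Ef) (compare Hu Hf Eg).
Qed.


Hypothesis HPc : forall i j, ~~ ctrl i -> P1 i j = P0 i j.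

Definition VS (S : {set 'I_N}) (nu : R) := Vf (Sact R ctrl S) nu.
Definition D (S : {set 'I_N}) (nu : R) (j : 'I_N) := Bq (VS S nu) j - Aq nu (VS S nu) j.

Lemma unit01_Sact (S : {set 'I_N}) : unit01 (Sact R ctrl S).
Proof. by move=> i; rewrite /Sact; case: ifP => _; rewrite ?lexx ?ler01. Qed.

Lemma Sact1 (S : {set 'I_N}) j : (j \in S) || ~~ ctrl j -> Sact R ctrl S j = 1.
Proof. by rewrite /Sact => ->. Qed.

Lemma Sact0 (S : {set 'I_N}) j : ~~ ((j \in S) || ~~ ctrl j) -> Sact R ctrl S j = 0.
Proof. by rewrite /Sact => /negbTE ->. Qed.

Lemma VS_A (S : {set 'I_N}) nu j : (j \in S) || ~~ ctrl j -> VS S nu j = Aq nu (VS S nu) j.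
Proof. move=> H; rewrite /VS Vf_fix; last exact: unit01_Sact.
by rewrite /Tu Sact1 // subrr mul0r add0r mul1r. Qed.

Lemma VS_B (S : {set 'I_N}) nu j : ~~ ((j \in S) || ~~ ctrl j) -> VS S nu j = Bq (VS S nu) j.
Proof. move=> H; rewrite /VS Vf_fix; last exact: unit01_Sact.
by rewrite /Tu Sact0 // subr0 mul0r addr0 mul1r. Qed.

Lemma sum_subl (a b f : 'I_N -> R) :
  \sum_k (a k - b k) * f k = \sum_k a k * f k - \sum_k b k * f k.
Proof. by rewrite -sumrB; apply: eq_bigr => k _; ring. Qed.

Lemma D_lin (S : {set 'I_N}) nu j : ctrl j -> D S nu j = D S 0 j - nu * wS ctrl P0 P1 beta th S j.
Proof.
move=> cj; rewrite /D /VS /Vf /Aq /Bq /wS /bS cj sum_subl !sum_lin /=; ring.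
Qed.

Lemma tie (S : {set 'I_N}) p nu : ctrl p -> p \in S -> D S nu p = 0 ->
  forall j, D (S :\ p) nu j = D S nu j.
Proof.
move=> cp pS D0.
have E : VS (S :\ p) nu =1 VS S nu.
  apply: (@uniq_fix (Sact R ctrl (S :\ p)) nu); first exact: unit01_Sact.
    by move=> i; rewrite /VS -Vf_fix //; exact: unit01_Sact.
  move=> i; case: (eqVneq i p) => [->|ip].
    rewrite /Tu /Sact !inE eqxx /= cp /= subr0 mul0r addr0 mul1r.
    by move: D0; rewrite /D => /eqP; rewrite subr_eq0 => /eqP ->; rewrite -VS_A // pS.
  rewrite /VS Vf_fix; last exact: unit01_Sact.
  by rewrite /Tu /Sact !inE ip /=.
move=> j; rewrite /D /Aq /Bq.
by congr (_ + _ - (_ + _ + _ * _)); [congr (_ * _) | ]; apply: eq_bigr => k _; rewrite E.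
Qed.

Lemma adm_Sact (S : {set 'I_N}) : admissible ctrl (Sact R ctrl S).
Proof. split; first exact: unit01_Sact. by move=> i ci; rewrite /Sact ci orbT. Qed.

Lemma optimal (S : {set 'I_N}) nu :
  (forall j, ctrl j -> j \in S -> 0 <= D S nu j) ->
  (forall j, ctrl j -> j \notin S -> D S nu j <= 0) ->
  forall u, admissible ctrl u -> forall i, VS S nu i <= Vf u nu i.
Proof.
move=> H1 H2 u [Hu Hu1] i.
apply: (compare Hu); first exact: Vf_fix.
move=> j; have := H1 j; have := H2 j; rewrite /D.
case: (boolP ((j \in S) || ~~ ctrl j)) => Hj.
  rewrite {1}(VS_A nu Hj) /Tu.
  case/orP: Hj => [jS|ncj].
    case: (boolP (ctrl j)) => cj; last by rewrite Hu1 // subrr mul0r add0r mul1r.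
    move=> _ /(_ isT jS) h; have := Hu j; nra.
  by rewrite Hu1 // subrr mul0r add0r mul1r.
rewrite {1}(VS_B nu Hj) /Tu.
move: Hj; rewrite negb_or negbK => /andP [jS cj] /(_ cj jS) h _.
have := Hu j; nra.
Qed.

Lemma vopt_eq (S : {set 'I_N}) nu :
  (forall j, ctrl j -> j \in S -> 0 <= D S nu j) ->
  (forall j, ctrl j -> j \notin S -> D S nu j <= 0) ->
  forall i, vopt ctrl P0 P1 h0 h1 beta th nu i = VS S nu i.
Proof.
move=> H1 H2 i; rewrite /vopt.
set E := (X in inf X).
have inE : E (VS S nu i) by exists (Sact R ctrl S) => //; exact: adm_Sact.
have lb : lbound E (VS S nu i).
  by move=> y [u Hu <-]; exact: (optimal H1 H2 Hu).
apply/eqP; rewrite eq_le; apply/andP; split.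
  by apply: (ge_inf (ex_intro _ _ lb)).
by apply: lb_le_inf => //; exists (VS S nu i).
Qed.

Lemma Sopt_eq (S : {set 'I_N}) nu :
  (forall j, ctrl j -> j \in S -> 0 <= D S nu j) ->
  (forall j, ctrl j -> j \notin S -> D S nu j <= 0) ->
  Sopt ctrl P0 P1 h0 h1 beta th nu = [set j | ctrl j & 0 <= D S nu j].
Proof.
move=> H1 H2; apply/setP => j; rewrite /Sopt !inE.
have E := vopt_eq H1 H2.
under eq_bigr => k _ do rewrite E.
under [X in _ <= _ + _ * X]eq_bigr => k _ do rewrite E.
by rewrite /D subr_ge0.
Qed.

Lemma D0 j : D (ctrlset ctrl) 0 j = hhat0 P0 P1 h0 h1 beta j 0.
Proof.
have S1 : forall i, Sact R ctrl (ctrlset ctrl) i = 1.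
  by move=> i; rewrite /Sact inE; case: (ctrl i).
have EP : Pu P0 P1 (Sact R ctrl (ctrlset ctrl)) = P1.
  by apply/matrixP => a b; rewrite mxE S1; ring.
have Eh : hu h0 h1 (Sact R ctrl (ctrlset ctrl)) = h1.
  by apply/matrixP => a b; rewrite (ord1 b) mxE S1; ring.
set w := invmx (1%:M - beta *: P1) *m h1.
have EV : forall k, VS (ctrlset ctrl) 0 k = w k 0.
  by move=> k; rewrite /VS /Vf /vpol EP Eh mul0r addr0.
have Hw := disc_fix h1 HP1 j; rewrite -/(disc beta P1 h1) in Hw.
have sub_e : forall (A B : 'cV[R]_N) i, (A - B) i 0 = A i 0 - B i 0.
  by move=> A B i; rewrite !mxE.
rewrite /hhat0 -mulmxA sub_e entryA -/w.
rewrite /D /Aq /Bq.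
under eq_bigr => k _ do rewrite EV.
under [X in _ - (_ + _ * X) = _]eq_bigr => k _ do rewrite EV.
move: Hw; rewrite /disc -/w => ->; ring.
Qed.


Local Notation n := #|ctrlset ctrl|.
Variables (F : {set {set 'I_N}}) (pi : 'I_n -> 'I_N) (nu : 'I_N -> R) (y : nat -> R).
Hypothesis HF : setsys_F ctrl F.
Hypothesis Hw : forall S j, S \in F -> ctrl j -> 0 < wS ctrl P0 P1 beta th S j.
Hypothesis Hy : forall k : 'I_n,
    let S := Sk ctrl pi k in
    let resid j := hhat0 P0 P1 h0 h1 beta j 0 -
       \sum_(l < n | (l < k)%N) y l * wS ctrl P0 P1 beta th (Sk ctrl pi l) j in
    [/\ pi k \in inner_bd F S,
        y k = resid (pi k) / wS ctrl P0 P1 beta th S (pi k),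
        (forall j, j \in inner_bd F S -> y k <= resid j / wS ctrl P0 P1 beta th S j)
      & nu (pi k) = \sum_(l < n | (l <= k)%N) y l].
Hypothesis Hmono : forall k l : 'I_n, (k <= l)%N -> nu (pi k) <= nu (pi l).

Local Notation Sn k := (Sk ctrl pi k).
Local Notation W l j := (wS ctrl P0 P1 beta th (Sn l) j).
Local Notation c j := (hhat0 P0 P1 h0 h1 beta j 0).
Local Notation Y k := (\sum_(i < k) y i).
Local Notation res k j := (c j - \sum_(i < k) y i * W i j).

Lemma sum_narrow k (f : nat -> R) : (k <= n)%N ->
  \sum_(l < n | (l < k)%N) f l = \sum_(i < k) f i.
Proof. by move=> kn; rewrite (big_ord_widen n f kn). Qed.

Lemma pi_in (k : 'I_n) : pi k \in Sn k.
Proof. by have [+ _ _ _] := Hy k; rewrite inE => /andP []. Qed.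

Lemma pi_F (k : 'I_n) : Sn k :\ pi k \in F.
Proof. by have [+ _ _ _] := Hy k; rewrite inE => /andP []. Qed.

Lemma pi_ctrl (k : 'I_n) : ctrl (pi k).
Proof. by have := pi_in k; rewrite inE => /andP []. Qed.

Lemma pi_new (l k : 'I_n) : (l < k)%N -> pi l != pi k.
Proof.
move=> lk; have := pi_in k; rewrite inE => /andP [_ /forallP /(_ l)].
by rewrite lk.
Qed.

Lemma pi_inj : injective pi.
Proof.
move=> a b e; apply/eqP; case: (ltngtP a b) => [ab|ba|/val_inj -> //].
  by have := pi_new ab; rewrite e eqxx.
by have := pi_new ba; rewrite e eqxx.
Qed.

Lemma Sn_mem k (m : 'I_n) : (pi m \in Sn k) = (k <= m)%N.
Proof.
rewrite inE pi_ctrl /=; apply/forallP/idP.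
  move=> H; rewrite leqNgt; apply/negP => mk; have := H m; by rewrite mk eqxx.
move=> km l; apply/implyP => lk; apply/eqP => /pi_inj e.
by rewrite e ltnNge km in lk.
Qed.

Lemma Sn_S (k : 'I_n) : Sn k.+1 = Sn k :\ pi k.
Proof.
apply/setP => j; rewrite !inE; apply/idP/idP.
  case/andP => cj /forallP H; rewrite cj /=; apply/andP; split.
    by have := H k; rewrite ltnSn eq_sym.
  by apply/forallP => l; apply/implyP => lk; have := H l; rewrite ltnS ltnW.
case/and3P => jk cj /forallP H; rewrite cj; apply/forallP => l; apply/implyP.
rewrite ltnS leq_eqVlt => /orP [/eqP e|lt].
  have -> : l = k by apply: val_inj.
  by rewrite eq_sym.
by have := H l; rewrite lt.
Qed.

Lemma Sn0 : Sn 0 = ctrlset ctrl.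
Proof. by apply/setP => j; rewrite !inE; case: (ctrl j) => //=; apply/forallP. Qed.

Lemma ctrl_in_F : ctrlset ctrl \in F.
Proof.
case: HF => _ H0 _ Haug.
case: (@arg_maxnP _ set0 (fun S => S \in F) (fun S => #|S|) H0) => S SF Smax.
case: (eqVneq S (ctrlset ctrl)) => [<-//|ne].
have [j jD jF] := Haug S SF ne.
have := Smax _ jF; rewrite cardsU1; move: jD; rewrite inE => /andP [jnS _].
by rewrite jnS /= add1n ltnn.
Qed.

Lemma Sn_F k : (k <= n)%N -> Sn k \in F.
Proof.
elim: k => [_|k IH kn]; first by rewrite Sn0 ctrl_in_F.
have kn' : (k < n)%N := kn.
have -> : Sn k.+1 = Sn (Ordinal kn') :\ pi (Ordinal kn') by exact: (Sn_S (Ordinal kn')).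
exact: pi_F.
Qed.

Lemma W_pos k j : (k <= n)%N -> ctrl j -> 0 < W k j.
Proof. by move=> kn cj; apply: Hw => //; exact: Sn_F. Qed.

Lemma y_eq (k : 'I_n) : y k * W k (pi k) = res k (pi k).
Proof.
have [_ E _ _] := Hy k; rewrite E /= (sum_narrow (fun l => y l * W l (pi k))) ?(ltnW (ltn_ord k)) //.
by rewrite divfK // gt_eqF // W_pos ?pi_ctrl // ltnW.
Qed.

Lemma nu_eq (k : 'I_n) : nu (pi k) = Y k.+1.
Proof.
have [_ _ _ ->] := Hy k.
rewrite (eq_bigl (fun l : 'I_n => (l < k.+1)%N)) //.
by rewrite sum_narrow.
Qed.

Lemma res_last (m : 'I_n) : res m.+1 (pi m) = 0.
Proof. rewrite big_ord_recr /= (y_eq m); ring. Qed.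

Lemma y_ge0 i : (0 < i)%N -> (i < n)%N -> 0 <= y i.
Proof.
move=> i0 iN; have ip : (i.-1 < n)%N by rewrite (leq_ltn_trans (leq_pred i)).
have := @Hmono (Ordinal ip) (Ordinal iN) (leq_pred i).
rewrite !nu_eq /= prednK // big_ord_recr /=; lra.
Qed.

Lemma pi_surj j : ctrl j -> exists m, pi m = j.
Proof.
have Himg : [set pi m | m : 'I_n] = ctrlset ctrl.
  apply/eqP; rewrite eqEcard card_imset; last exact: pi_inj.
  rewrite card_ord leqnn andbT; apply/subsetP => _ /imsetP [m _ ->].
  by rewrite inE pi_ctrl.
move=> cj; have : j \in [set pi m | m : 'I_n] by rewrite Himg inE.
by case/imsetP => m _ ->; exists m.
Qed.

Lemma K1 k : (k <= n)%N -> forall j, ctrl j -> D (Sn k) (Y k) j = res k j.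
Proof.
elim: k => [_|k IH kn] j cj.
  by rewrite Sn0 !big_ord0 subr0 D0.
have kn' : (k < n)%N := kn.
have Dk : forall j, ctrl j -> D (Sn k) (Y k.+1) j = res k j - y k * W k j.
  move=> j' cj'; have := IH (ltnW kn) j' cj'.
  rewrite D_lin // (D_lin _ (Y k.+1)) // => <-.
  by rewrite big_ord_recr /= mulrDl opprD addrA.
have Dp : D (Sn k) (Y k.+1) (pi (Ordinal kn')) = 0.
  by rewrite Dk ?pi_ctrl // -(y_eq (Ordinal kn')) subrr.
have -> : Sn k.+1 = Sn (Ordinal kn') :\ pi (Ordinal kn') by exact: (Sn_S (Ordinal kn')).
by rewrite (tie (pi_ctrl (Ordinal kn')) (pi_in (Ordinal kn')) Dp) Dk // big_ord_recr /= opprD addrA.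
Qed.


Lemma res_ge (m : 'I_n) k : (k <= m)%N ->
  res k (pi m) = \sum_(k <= i < m.+1) y i * W i (pi m).
Proof.
move=> km; move: (res_last m).
rewrite -!(big_mkord xpredT (fun i => y i * W i (pi m))).
rewrite (big_cat_nat (leq0n k) (leqW km)) /=; lra.
Qed.

Lemma res_lt (m : 'I_n) k : (m < k)%N ->
  res k (pi m) = - \sum_(m.+1 <= i < k) y i * W i (pi m).
Proof.
move=> mk; move: (res_last m).
rewrite -!(big_mkord xpredT (fun i => y i * W i (pi m))).
rewrite (big_cat_nat (leq0n m.+1) mk) /=; lra.
Qed.

Lemma sum_pos a b j : (0 < a)%N -> (b <= n)%N -> ctrl j ->
  0 <= \sum_(a <= i < b) y i * W i j.
Proof.
move=> a0 bn cj; rewrite big_nat_cond; apply: sumr_ge0 => i /andP [/andP [ai ib] _].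
apply: mulr_ge0; first apply: y_ge0.
- exact: leq_trans ai.
- exact: leq_trans ib bn.
by apply: ltW; apply: W_pos => //; apply: leq_trans (ltnW ib) bn.
Qed.

Lemma main x : Sopt ctrl P0 P1 h0 h1 beta th x = [set j | ctrl j & x <= nu j]
    /\ Sopt ctrl P0 P1 h0 h1 beta th x \in F.
Proof.
pose s := [seq (x <= nu (pi m)) | m <- enum 'I_n].
pose k := find id s.
have sz : size s = n by rewrite size_map size_enum_ord.
have kn : (k <= n)%N by rewrite -sz find_size.
have Hk : forall m : 'I_n, (x <= nu (pi m)) = (k <= m)%N.
  move=> m; case: (ltnP m k) => mk.
    have := before_find false mk.
    by rewrite (nth_map m) ?size_enum_ord ?ltn_ord // nth_ord_enum.
  have kn' : (k < n)%N := leq_ltn_trans mk (ltn_ord m).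
  have hs : has id s by rewrite has_find sz.
  have := nth_find false hs.
  rewrite -/k (nth_map (Ordinal kn')) ?size_enum_ord //.
  rewrite (nth_ord_enum (Ordinal kn') (Ordinal kn')) => h.
  by apply: le_trans h (@Hmono (Ordinal kn') m mk).
pose S := Sn k.
have SE : S = [set j | ctrl j & x <= nu j].
  apply/setP => j; rewrite [RHS]inE; case: (boolP (ctrl j)) => cj /=.
    by have [m <-] := pi_surj cj; rewrite Sn_mem Hk.
  by rewrite /S inE (negbTE cj).
have DS : forall j, ctrl j -> D S x j = res k j - (x - Y k) * W k j.
  move=> j cj; have := K1 kn cj; rewrite D_lin // (D_lin _ x) // => <-.
  by rewrite mulrBl opprB addrA subrK.
have pos : forall j, ctrl j -> j \in S -> 0 <= D S x j.
  move=> j cj; have [m <-] := pi_surj cj; rewrite Sn_mem => km.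
  have kn' : (k < n)%N := leq_ltn_trans km (ltn_ord m).
  rewrite DS ?pi_ctrl // res_ge // big_ltn ?ltnS //.
  have e1 := Hk (Ordinal kn'); rewrite leqnn nu_eq big_ord_recr /= in e1.
  have e2 := @sum_pos (k.+1) (m.+1) (pi m) (ltn0Sn k) (ltn_ord m) (pi_ctrl m).
  have e3 := ltW (W_pos (ltnW kn') (pi_ctrl m)).
  set Wk := W k (pi m) in e3 *; set Yk := Y k in e1 *.
  have : 0 <= (Yk + y k - x) * Wk by apply: mulr_ge0 => //; rewrite subr_ge0.
  rewrite /=; nra.
have neg : forall j, ctrl j -> j \notin S -> D S x j < 0.
  move=> j cj; have [m <-] := pi_surj cj; rewrite Sn_mem -ltnNge => mk.
  have k0 : (0 < k)%N := leq_ltn_trans (leq0n m) mk.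
  have kp : (k.-1 < n)%N by apply: leq_trans kn; rewrite ltn_predL.
  rewrite DS ?pi_ctrl // res_lt //.
  have e0 : ~~ (x <= nu (pi (Ordinal kp))) by rewrite Hk -ltnNge ltn_predL.
  have e1 : ~~ (x <= Y k) by move: e0; rewrite nu_eq /= prednK.
  have e2 := @sum_pos (m.+1) k (pi m) (ltn0Sn m) kn (pi_ctrl m).
  have e3 := W_pos kn (pi_ctrl m).
  set Wk := W k (pi m) in e3 *; set Yk := Y k in e1 *.
  have : 0 < (x - Yk) * Wk by apply: mulr_gt0 => //; rewrite subr_gt0 ltNge.
  nra.
have SO := Sopt_eq pos (fun j cj jn => ltW (neg j cj jn)).
have SO' : Sopt ctrl P0 P1 h0 h1 beta th x = S.
  rewrite SO; apply/setP => j; rewrite inE.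
  case: (boolP (ctrl j)) => cj /=; last by rewrite /S inE (negbTE cj).
  case: (boolP (j \in S)) => jS; first by rewrite pos.
  by apply/negbTE; rewrite -ltNge neg.
by rewrite SO' -SE; split => //; exact: Sn_F.
Qed.

End MDP.

Unset Implicit Arguments.
Set Strict Implicit.

Theorem theorem9 (R : realType) (N : nat) (ctrl : pred 'I_N)
    (P0 P1 : 'M[R]_N) (h0 h1 : 'cV[R]_N) (beta : R) (th : 'I_N -> R)
    (F : {set {set 'I_N}})
    (pi : 'I_#|ctrlset ctrl| -> 'I_N) (nu : 'I_N -> R) :
  0 < beta < 1 ->
  stochastic P0 -> stochastic P1 ->
  (forall i j, ~~ ctrl i -> P1 i j = P0 i j) ->
  (forall j, 0 < th j) ->
  setsys_F ctrl F ->
  (* PCL-indexability (i) *)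
  (forall S j, S \in F -> ctrl j -> 0 < wS ctrl P0 P1 beta th S j) ->
  (* (pi, nu) produced by the adaptive-greedy algorithm on input hhat0 *)
  AG_run ctrl F (wS ctrl P0 P1 beta th)
    (fun j => hhat0 P0 P1 h0 h1 beta j 0) pi nu ->
  (* PCL-indexability (ii) *)
  (forall k l : 'I_#|ctrlset ctrl|, (k <= l)%N -> nu (pi k) <= nu (pi l)) ->
  forall x : R,
    Sopt ctrl P0 P1 h0 h1 beta th x = [set j | ctrl j & x <= nu j]
    /\ Sopt ctrl P0 P1 h0 h1 beta th x \in F.
Proof.
move=> /andP [Hb0 Hb1] HP0 HP1 _ _ HF Hw [y Hy] Hmono x.
exact: (main Hb0 Hb1 HP0 HP1 HF Hw Hy Hmono x).
Qed.
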